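(* There exists a distributionally robust constrained MDP (finite $\mathcal{S}$, $\mathcal{A}$, discount $\gamma\in[0,1)$, $(s,a)$-rectangular uncertainty set $\mathcal{P}$, reward $r$, and a single constraint reward $g$) for which there is no consistency operator that, for every $\lambda_t\ge0$, simultaneously satisfies: (i) linearity; and (ii) $\gamma$-contraction to the target, i.e. for every policy $\pi\in\Pi$, $\mathcal{T}^\pi$ is a $\gamma$-contraction in $\|\cdot\|_\infty$ whose unique fixed point is $V^\pi_r - \lambda_t V^\pi_g$. (The operator may depend on $\lambda_t$.)
   Context: A distributionally robust constrained MDP consists of finite sets $\mathcal{S},\mathcal{A}$, $\gamma\in[0,1)$, an $(s,a)$-rectangular uncertainty set $\mathcal{P}=\otimes_{(s,a)}\mathcal{P}_{s,a}$ with $\mathcal{P}_{s,a}\subseteq\Delta(\mathcal{S})$, reward $r:\mathcal{S}\times\mathcal{A}\to\mathbb{R}_{\ge0}$ and constraint reward $g:\mathcal{S}\times\mathcal{A}\to\mathbb{R}_{\ge0}$. $\Pi=\Delta(\mathcal{A})^{\mathcal{S}}$ is the set of stationary stochastic policies (including deterministic ones); $\pi[s,\cdot]\in\Delta(\mathcal{A})$. For a reward $u$, the robust value function is $V^\pi_u(s) = \min_{\mathcal{K}\in\otimes_{t\ge0}\mathcal{P}}\mathbb{E}_{\mathcal{K}}[\sum_{t\ge0}\gamma^t u(s_t,a_t)\mid s_0=s,\pi]$, the worst case over sequences of transition kernels from $\mathcal{P}$ (one per time step) with $a_t\sim\pi[s_t,\cdot]$. A consistency operator is a family of maps $\mathcal{T}^\pi:\mathbb{R}^{\mathcal{S}}\to\mathbb{R}^{\mathcal{S}}$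 indexed by $\pi\in\Pi$. It is linear if there is $f:\mathbb{R}^{\mathcal{S}}\to\mathbb{R}^{\mathcal{S}\times\mathcal{A}}$, independent of $\pi$, with $[\mathcal{T}^\pi v](s) = \langle\pi[s,\cdot], f(v)[s,\cdot]\rangle$ for all $\pi, v, s$. *)

(* Defs.v *)
From HB Require Import structures.
From mathcomp Require Import all_boot all_order all_algebra.
From mathcomp Require Import all_classical all_reals all_analysis.

Set Implicit Arguments.
Unset Strict Implicit.
Unset Printing Implicit Defensive.

Import Order.TTheory GRing.Theory Num.Theory numFieldNormedType.Exports.
Local Open Scope classical_set_scope.
Local Open Scope ring_scope.

Section DRCMDP.
Context {R : realType} {S A : finType}.

Definition is_dist (T : finType) (p : T -> R) : Prop :=
  (forall x, 0 <= p x) /\ \sum_(x : T) p x = 1.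

Definition is_policy (pi : S -> A -> R) : Prop := forall s, is_dist (pi s).

Definition kernel := S -> A -> S -> R.

Definition in_rect (Pset : S -> A -> set (S -> R)) (P : kernel) : Prop :=
  forall s a, Pset s a (P s a).

Definition in_rect_seq (Pset : S -> A -> set (S -> R)) (K : nat -> kernel) : Prop :=
  forall t, in_rect Pset (K t).

Fixpoint state_dist (K : nat -> kernel) (pi : S -> A -> R) (s0 : S) (t : nat) : S -> R :=
  match t with
  | 0 => fun s => (s == s0)%:R
  | t'.+1 => fun s' => \sum_(s : S) state_dist K pi s0 t' s *
                         \sum_(a : A) pi s a * K t' s a s'
  end.

Definition exp_reward (K : nat -> kernel) (pi : S -> A -> R) (u : S -> A -> R)
    (s0 : S) (t : nat) : R :=
  \sum_(s : S) state_dist K pi s0 t s * \sum_(a : A) pi s a * u s a.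

Definition disc_return (gamma : R) (K : nat -> kernel) (pi : S -> A -> R)
    (u : S -> A -> R) (s0 : S) : R :=
  limn (series (fun t => gamma ^+ t * exp_reward K pi u s0 t) : R^nat).

Definition robust_value (gamma : R) (Pset : S -> A -> set (S -> R))
    (pi : S -> A -> R) (u : S -> A -> R) : S -> R :=
  fun s => inf [set disc_return gamma K pi u s | K in in_rect_seq Pset].

Definition supnorm (v : S -> R) : R := \big[Num.max/0]_(s : S) `|v s|.

Definition consistency_op := (S -> A -> R) -> (S -> R) -> (S -> R).

Definition linear_consistency (T : consistency_op) : Prop :=
  exists f : (S -> R) -> S -> A -> R,
    forall pi, is_policy pi -> forall v s, T pi v s = \sum_(a : A) pi s a * f v s a.

Definition contraction (gamma : R) (F : (S -> R) -> S -> R) : Prop :=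
  forall v w, supnorm (fun s => F v s - F w s) <= gamma * supnorm (fun s => v s - w s).

Definition contraction_to_target (gamma : R) (Pset : S -> A -> set (S -> R))
    (r g : S -> A -> R) (lam : R) (T : consistency_op) : Prop :=
  forall pi, is_policy pi ->
    let target := fun s => robust_value gamma Pset pi r s - lam * robust_value gamma Pset pi g s in
    contraction gamma (T pi) /\ T pi target = target /\
    (forall v, T pi v = v -> v = target).

End DRCMDP.

(* Main.v *)
Require Import Defs.
From HB Require Import structures.
From mathcomp Require Import all_boot all_order all_algebra.
From mathcomp Require Import all_classical all_reals all_analysis.
From mathcomp Require Import ring lra.

Import Order.TTheory GRing.Theory Num.Theory numFieldNormedType.Exports.
Local Open Scope classical_set_scope.
Local Open Scope ring_scope.

Section Ex.
Variable R : realType.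

Definition St := option (option bool).
Definition S0 : St := None.
Definition Z : St := Some None.
Definition S1 : St := Some (Some true).
Definition S2 : St := Some (Some false).

Definition dlt {T : finType} (x : T) : T -> R := fun y => (y == x)%:R.

Lemma sum_dlt {T : finType} (x : T) (F : T -> R) :
  \sum_(y : T) dlt x y * F y = F x.
Proof.
rewrite (bigD1 x) //= /dlt eqxx mul1r big1 ?addr0 // => y /negbTE ->.
by rewrite mul0r.
Qed.

Lemma dlt_dist {T : finType} (x : T) : is_dist (dlt x).
Proof.
split; first by move=> y; rewrite /dlt ler0n.
by rewrite -[RHS](sum_dlt x (fun _ => 1)); apply: eq_bigr => y _; rewrite mulr1.
Qed.

Definition Pset : St -> bool -> set (St -> R) :=
  fun s a p => if s is None then (p = dlt S1 \/ p = dlt S2) else p = dlt Z.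

Definition pid (d : St -> bool) : St -> bool -> R := fun s a => dlt (d s) a.

Lemma step K d s0 t x : (forall y, state_dist K (pid d) s0 t y = dlt x y) ->
  forall y, state_dist K (pid d) s0 t.+1 y = K t x (d x) y.
Proof.
move=> H y /=.
under eq_bigr => s _ do rewrite H.
rewrite sum_dlt.
by rewrite /pid (sum_dlt (d x) (fun a => K t x a y)).
Qed.

Arguments step {K d s0 t x}.

Lemma rect_some K t y a : in_rect_seq Pset K -> K t (Some y) a = dlt Z.
Proof. by move=> H; have := H t (Some y) a. Qed.

Arguments rect_some {K t y a}.

Lemma dist_Z K d s0 t : in_rect_seq Pset K ->
  (forall y, state_dist K (pid d) s0 t y = dlt Z y) ->
  forall n, (t <= n)%N -> forall y, state_dist K (pid d) s0 n y = dlt Z y.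
Proof.
move=> HK H n; elim: n => [|n IH].
  by rewrite leqn0 => /eqP <-.
rewrite leq_eqVlt => /orP [/eqP <- //|]; rewrite ltnS => /IH {}IH y.
by rewrite (step IH) (rect_some HK).
Qed.

Arguments dist_Z {K d s0 t}.

Lemma expr_dlt K d u s0 t x : (forall y, state_dist K (pid d) s0 t y = dlt x y) ->
  exp_reward K (pid d) u s0 t = u x (d x).
Proof.
move=> H; rewrite /exp_reward.
under eq_bigr => s _ do rewrite H.
by rewrite sum_dlt /pid (sum_dlt (d x) (fun a => u x a)).
Qed.

Lemma limn_eventually (u : nat -> R) N : (forall n, (N <= n)%N -> u n = 0) ->
  limn (series u : R^nat) = \sum_(0 <= k < N) u k.
Proof.
move=> H; apply: norm_lim_near_cst.
near=> n.
have hn : (N <= n)%N by near: n; exists N.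
rewrite /series /= (big_cat_nat (leq0n N) hn) /= [X in _ + X]big1_seq ?addr0 //.
move=> k /andP [_]; rewrite mem_index_iota => /andP [hk _]; exact: H.
Unshelve. all: by end_near.
Qed.


Variable gam : R.

Lemma ret_some K d u y : in_rect_seq Pset K -> (forall a, u Z a = 0) ->
  disc_return gam K (pid d) u (Some y) = u (Some y) (d (Some y)).
Proof.
move=> HK hu; rewrite /disc_return (@limn_eventually _ 1).
  by rewrite big_nat1 expr0 mul1r (@expr_dlt K d u (Some y) 0 (Some y)).
have h0 : forall z, state_dist K (pid d) (Some y) 0 z = dlt (Some y) z by [].
have h1 := step h0; rewrite (rect_some HK) in h1.
move=> n hn; rewrite (@expr_dlt K d u (Some y) n Z) ?hu ?mulr0 //.
exact: (dist_Z HK h1).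
Qed.

Lemma ret_none K d u x : in_rect_seq Pset K -> (forall a, u Z a = 0) ->
  (forall a, u S0 a = 0) -> K 0%N S0 (d S0) = dlt x -> x != S0 ->
  disc_return gam K (pid d) u S0 = gam * u x (d x).
Proof.
move=> HK hu h0u hK hx.
have h0 : forall z, state_dist K (pid d) S0 0 z = dlt S0 z by [].
have h1 := step h0; rewrite hK in h1.
rewrite /disc_return (@limn_eventually _ 2).
  rewrite big_nat_recr //= big_nat1 expr0 mul1r expr1.
  rewrite (@expr_dlt K d u S0 0 S0) // h0u add0r.
  by rewrite (@expr_dlt K d u S0 1 x).
move: hx h1; case: x hK => // y hK _ h1.
have h2 := step h1; rewrite (rect_some HK) in h2.
move=> n hn; rewrite (@expr_dlt K d u S0 n Z) ?hu ?mulr0 //.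
exact: (dist_Z HK h2).
Qed.

Definition Kw (b : bool) : nat -> @Defs.kernel R St bool :=
  fun t s a => if s is None then (if b then dlt S1 else dlt S2) else dlt Z.

Lemma Kw_rect b : in_rect_seq Pset (Kw b).
Proof. by move=> t [y|] a //=; case: b; [left|right]. Qed.

Lemma inf_const (E : set R) c : E c -> (forall e, E e -> e = c) -> inf E = c.
Proof.
move=> Ec H; have -> : E = [set c] by apply/seteqP; split => [e /H|e ->].
exact: inf1.
Qed.

Lemma inf_two (E : set R) a b : E a -> E b -> (forall e, E e -> e = a \/ e = b) ->
  inf E = Num.min a b.
Proof.
move=> Ea Eb H.
have lb : lbound E (Num.min a b).
  by move=> e /H [->|->]; rewrite ge_min lexx ?orbT.
have Em : E (Num.min a b) by rewrite minEle; case: ifP.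
apply/le_anti/andP; split.
  by apply: ge_inf => //; exists (Num.min a b).
by apply: lb_le_inf => //; exists a.
Qed.

Lemma rv_some d u y : (forall a, u Z a = 0) ->
  robust_value gam Pset (pid d) u (Some y) = u (Some y) (d (Some y)).
Proof.
move=> hu; apply: inf_const.
  by exists (Kw true); [exact: Kw_rect| exact: ret_some (Kw_rect true) hu].
by move=> e [K HK <-]; exact: ret_some.
Qed.

Lemma rv_none d u : (forall a, u Z a = 0) -> (forall a, u S0 a = 0) ->
  robust_value gam Pset (pid d) u S0 =
  Num.min (gam * u S1 (d S1)) (gam * u S2 (d S2)).
Proof.
move=> hu h0; apply: inf_two.
- by exists (Kw true); [exact: Kw_rect| exact: ret_none (Kw_rect true) hu h0 _ _].
- by exists (Kw false); [exact: Kw_rect| exact: ret_none (Kw_rect false) hu h0 _ _].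
move=> e [K HK <-].
have := HK 0%N S0 (d S0); case=> hK.
  by left; exact: ret_none HK hu h0 hK _.
by right; exact: ret_none HK hu h0 hK _.
Qed.

Lemma supnorm_ge (w : St -> R) x : `|w x| <= supnorm w.
Proof. by rewrite /supnorm (bigD1 x) //= le_max lexx. Qed.

Lemma supnorm_le (w : St -> R) c : 0 <= c -> (forall s, `|w s| <= c) -> supnorm w <= c.
Proof.
move=> c0 H; rewrite /supnorm; apply: (big_ind (fun y => y <= c)) => //.
by move=> x y hx hy; rewrite ge_max hx hy.
Qed.

End Ex.

Definition rr {R : realType} (s : St) (a : bool) : R :=
  match s with
  | Some (Some true) => if a then 0 else 2
  | Some (Some false) => if a then 1 else 3
  | _ => 0 end.
Definition gg {R : realType} (s : St) (a : bool) : R :=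
  match s with Some (Some _) => if a then 0 else 2 | _ => 0 end.
Definition d1 : St -> bool := fun _ => true.
Definition d2 : St -> bool := fun s => if s == S1 then false else true.

Theorem theorem2 (R : realType) :
  exists (S A : finType) (gamma : R) (Pset : S -> A -> set (S -> R))
         (r g : S -> A -> R),
    0 <= gamma < 1 /\
    (forall s a, Pset s a !=set0) /\
    (forall s a p, Pset s a p -> is_dist p) /\
    (forall s a, 0 <= r s a) /\
    (forall s a, 0 <= g s a) /\
        ~ (forall lam : R, 0 <= lam ->
             exists T : @consistency_op R S A,
               linear_consistency T /\ contraction_to_target gamma Pset r g lam T).
Proof.
exists St, bool, (2^-1 : R), (@Pset R), rr, gg.
split; first by apply/andP; split; lra.
split; first by move=> [y|] a; [exists (dlt R Z)|exists (dlt R S1); left].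
split; first by move=> [y|] a p /= => [->|[]->]; exact: dlt_dist.
split; first by move=> [[[]|]|] [] //=; rewrite ?ler0n.
split; first by move=> [[[]|]|] [] //=; rewrite ?ler0n.
move=> H; have [T [[f Hf] Hc]] := H 1 ler01.
have hp : forall d, is_policy (@pid R d) by move=> d s; exact: dlt_dist.
move: (Hc _ (hp d1)) (Hc _ (hp d2)) => /= [Hc1 [Fix1 _]] [_ [Fix2 _]].
set v1 := (fun s => _) in Hc1 Fix1.
set v2 := (fun s => _) in Fix2.
have e2 : T (pid R d1) v2 S0 = v2 S0.
  by rewrite -[RHS](congr1 (fun w => w S0) Fix2) !Hf ?hp.

have key := Hc1 v1 v2.
have := le_trans (supnorm_ge _ _ S0) key.
rewrite /= e2 (congr1 (fun w => w S0) Fix1).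
have hv : forall y, v1 (Some y) - v2 (Some y) = 0.
  move=> y; rewrite /v1 /v2 !rv_some //; case: y => [[]|] //=; lra.
have hv0 : v1 S0 - v2 S0 = - 2^-1.
  rewrite /v1 /v2 !rv_none //= !mulr0 !mulr1 minxx.
  rewrite (@min_l _ _ 0) ?(@min_r _ _ (2^-1 * 2)); lra.
have : supnorm (fun s => v1 s - v2 s) <= 2^-1.
  apply: supnorm_le; first lra.
  by move=> [y|]; [rewrite hv normr0; lra | rewrite hv0 normrN ger0_norm //; lra].
rewrite hv0 normrN ger0_norm; last lra.
move=> h1 h2.
have : (2^-1 : R) <= 2^-1 * 2^-1.
  apply: (le_trans h2); apply: ler_wpM2l => //; lra.
lra.
Qed.
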